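(* Setting: $n$ agents on a connected, undirected weighted graph $\mathcal G$ with symmetric adjacency weights $a_{i,j}\ge 0$ ($a_{i,j}>0$ iff $\{i,j\}$ is an edge) and Laplacian $L_n$; let $L=L_n\otimes I_m$. For $i\in\{1,\dots,n\}$, $\Omega_i\subset\mathbb R^{q_i}$ is closed and convex, $f^i$ is strictly convex on an open set containing $\Omega_i$, $W_i\in\mathbb R^{m\times q_i}$, and $d_i\in\mathbb R^m$ with $\sum_{i=1}^n d_i=d_0$. Let $\Omega=\prod_i\Omega_i$, $f(x)=\sum_i f^i(x_i)$, $W=[W_1,\dots,W_n]$, $\overline W=\mathrm{diag}\{W_1,\dots,W_n\}\in\mathbb R^{nm\times\sum_iq_i}$, $d=[d_1^{\rm T},\dots,d_n^{\rm T}]^{\rm T}$, and assume Slater's condition: some $x$ in the interior of $\Omega$ satisfies $Wx=d_0$. Consider the optimization problem $\min f(x)$ subject to $Wx=d_0$, $x\in\Omega$, and the differential inclusion (DPOFA) in $(y,\lambda,z)\in\mathbb R^{\sum_iq_i}\times\mathbb R^{nm}\times\mathbb R^{nm}$: $$\dot y\in\{-y+x-g+\overline W^{\rm T}\lambda:\ g\in\partial f(x)\},\quad \dot\lambda=d-\overline Wx-L\lambda-Lz,\quad \dot z=L\lambda,\quad x=P_\Omega(y).$$ Then: if $(y^*,\lambda^*,z^* )$ is an equilibrium of DPOFA, $x^*=P_\Omega(y^* )$ is a solution of the optimization problem; conversely, if $x^*\in\Omega$ is a solution of the optimization problem, there exists an equilibrium $(y^*,\lambda^*,z^* )$ of DPOFA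 with $x^*=P_\Omega(y^* )$.
   Context: $\partial f$ is the convex subdifferential; $P_\Omega$ is Euclidean projection onto $\Omega$. An equilibrium of the inclusion $\dot\xi\in\mathcal F(\xi)$ is a point $\xi_e$ with $0\in\mathcal F(\xi_e)$; here this means there is $g\in\partial f(x^* )$, $x^*=P_\Omega(y^* )$, with $0=-y^*+x^*-g+\overline W^{\rm T}\lambda^*$, $0=d-\overline Wx^*-Lz^*$, $0=L\lambda^*$. *)

(* Defs.v *)
From HB Require Import structures.
From mathcomp Require Import all_boot all_order all_algebra.
From mathcomp Require Import all_classical all_reals all_analysis.
Set Implicit Arguments. Unset Strict Implicit. Unset Printing Implicit Defensive.
Import Order.TTheory GRing.Theory Num.Theory.
Local Open Scope ring_scope.
Local Open Scope classical_set_scope.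

Section Defs.
Variable R : realType.

Definition vdot (k : nat) (u v : 'cV[R]_k) : R := (u^T *m v) 0 0.

Definition strictly_convex_on (k : nat) (U : set 'cV[R]_k) (f : 'cV[R]_k -> R) :=
  forall x y t, U x -> U y -> x != y -> 0 < t < 1 ->
    f (t *: x + (1 - t) *: y) < t * f x + (1 - t) * f y.

(* Agent-stacked vectors are represented as families indexed by 'I_n *)
Definition fam (n : nat) (q : 'I_n -> nat) := forall i : 'I_n, 'cV[R]_(q i).

Definition fdot n (q : 'I_n -> nat) (u v : fam q) : R := \sum_i vdot (u i) (v i).
Definition fsub n (q : 'I_n -> nat) (u v : fam q) : fam q := fun i => u i - v i.

Definition prod_set n (q : 'I_n -> nat) (S : forall i, set 'cV[R]_(q i)) : set (fam q) :=
  [set x | forall i, S i (x i)].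

Definition sum_fun n (q : 'I_n -> nat) (F : forall i, 'cV[R]_(q i) -> R) (x : fam q) : R :=
  \sum_i F i (x i).

Definition subgrad n (q : 'I_n -> nat) (U : set (fam q)) (f : fam q -> R) (x g : fam q) :=
  forall x', U x' -> f x + fdot g (fsub x' x) <= f x'.

Definition is_proj n (q : 'I_n -> nat) (Om : set (fam q)) (y x : fam q) :=
  Om x /\ forall z, Om z -> fdot (fsub y x) (fsub y x) <= fdot (fsub y z) (fsub y z).

Definition Wmul n m (q : 'I_n -> nat) (W : forall i, 'M[R]_(m, q i)) (x : fam q) : 'cV[R]_m :=
  \sum_i W i *m x i.
Definition Wbar n m (q : 'I_n -> nat) (W : forall i, 'M[R]_(m, q i)) (x : fam q) :
  fam (fun _ : 'I_n => m) := fun i => W i *m x i.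
Definition WbarT n m (q : 'I_n -> nat) (W : forall i, 'M[R]_(m, q i))
  (l : fam (fun _ : 'I_n => m)) : fam q := fun i => (W i)^T *m l i.

Definition laplacian n (a : 'I_n -> 'I_n -> R) : 'M[R]_n :=
  \matrix_(i, j) ((if i == j then \sum_k a i k else 0) - a i j).
(* (L_n ⊗ I_m) lambda, block i = sum_j (L_n)_{ij} lambda_j *)
Definition kronL n m (Ln : 'M[R]_n) (l : fam (fun _ : 'I_n => m)) :
  fam (fun _ : 'I_n => m) := fun i => \sum_j Ln i j *: l j.

Definition is_solution n m (q : 'I_n -> nat) (Om : set (fam q)) (f : fam q -> R)
  (W : forall i, 'M[R]_(m, q i)) (d0 : 'cV[R]_m) (x : fam q) :=
  Om x /\ Wmul W x = d0 /\
  forall x', Om x' -> Wmul W x' = d0 -> f x <= f x'.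

Definition dpofa_equilibrium n m (q : 'I_n -> nat) (Om : set (fam q)) (U : set (fam q))
  (f : fam q -> R) (W : forall i, 'M[R]_(m, q i)) (L : 'M[R]_n)
  (d : fam (fun _ : 'I_n => m)) (y : fam q) (l z : fam (fun _ : 'I_n => m)) :=
  exists x g : fam q, is_proj Om y x /\ subgrad U f x g /\
    (forall i, - y i + x i - g i + WbarT W l i = 0) /\
    (forall i, d i - Wbar W x i - kronL L l i - kronL L z i = 0) /\
    (forall i, kronL L l i = 0).

End Defs.

(* Main.v *)
Require Import Defs.
From HB Require Import structures.
From mathcomp Require Import all_boot all_order all_algebra.
From mathcomp Require Import all_classical all_reals all_analysis.
From mathcomp Require Import ring lra.
Import Order.TTheory GRing.Theory Num.Theory.
Import numFieldTopology.Exports numFieldNormedType.Exports.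
Local Open Scope ring_scope.
Local Open Scope classical_set_scope.

Definition sublin {R : realType} {N} (p : 'cV[R]_N -> R) :=
  (forall c v, 0 < c -> p (c *: v) <= c * p v) /\ (forall u v, p (u + v) <= p u + p v).

Lemma sublin_hom {R : realType} {N} {p : 'cV[R]_N -> R} c v :
  sublin p -> 0 < c -> p (c *: v) = c * p v.
Proof.
move=> [H1 H2] c0; apply/eqP; rewrite eq_le H1 //=.
have := H1 c^-1 (c *: v); rewrite invr_gt0 scalerA mulVf ?gt_eqF // scale1r => /(_ c0) h.
have ci : 0 < c^-1 by rewrite invr_gt0.
by rewrite -(ler_pM2l ci) mulrA mulVf ?gt_eqF // mul1r.
Qed.

Lemma sublin0 {R : realType} {N} {p : 'cV[R]_N -> R} : sublin p -> p 0 = 0.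
Proof.
move=> sp; have := sublin_hom 2 (0 : 'cV[R]_N) sp (ltr0Sn _ 1).
rewrite scaler0 => h; lra.
Qed.

Lemma sublin_line {R : realType} {N} {p : 'cV[R]_N -> R} e t :
  sublin p -> t * p e <= p (t *: e).
Proof.
move=> sp; have [t0|t0|->] := ltgtP t 0; last by rewrite mul0r scale0r sublin0.
- have h1 : p 0 <= p e + p (- e) by rewrite -(subrr e) sp.2.
  rewrite sublin0 // in h1.
  have -> : t *: e = (- t) *: (- e) by rewrite scaleNr scalerN opprK.
  rewrite sublin_hom ?oppr_gt0 //; nra.
- by rewrite sublin_hom.
Qed.

Definition INF {R : realType} {T : Type} (h : T -> R) := inf (range h).

Lemma INF_le {R : realType} {T : Type} {h : T -> R} b t :
  (forall s, b <= h s) -> INF h <= h t.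
Proof.
move=> hb; apply: (ge_inf); last by exists t.
by exists b => _ [s _ <-].
Qed.

Lemma le_INF {R : realType} {T : Type} {h : T -> R} b (t0 : T) :
  (forall s, b <= h s) -> b <= INF h.
Proof.
move=> hb; apply: lb_le_inf; first by exists (h t0), t0.
by move=> _ [s _ <-].
Qed.

Lemma transl_eq {R : realType} {N} (F : 'cV[R]_N -> R) e c :
  (forall v s, F (v + s *: e) <= F v + s * c) -> forall v s, F (v + s *: e) = F v + s * c.
Proof.
move=> h v s; apply/eqP; rewrite eq_le h /=.
have := h (v + s *: e) (- s); rewrite -addrA -scalerDl addrN scale0r addr0.
move=> h2; lra.
Qed.

Lemma ext_step {R : realType} {N} (q : 'cV[R]_N -> R) (e : 'cV[R]_N) :
  sublin q ->
  let q' := fun v => INF (fun t : R => q (v + t *: e) - t * q e) in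
  [/\ sublin q', (forall v, q' v <= q v),
      (forall v s, q' (v + s *: e) = q' v + s * q e) &
      (forall e' c', (forall v s, q (v + s *: e') = q v + s * c') ->
          forall v s, q' (v + s *: e') = q' v + s * c')].
Proof.
move=> sq q'.
have lb v t : - q (- v) <= q (v + t *: e) - t * q e.
  have h1 := sublin_line e t sq.
  have h2 : q (t *: e) <= q (v + t *: e) + q (- v).
    by have := sq.2 (v + t *: e) (- v); rewrite [v + _]addrC addrK.
  lra.
have INFle v t : q' v <= q (v + t *: e) - t * q e by apply: (INF_le (- q (- v))) => s; apply: lb.
split.
- split.
  + move=> c v c0.
    have -> : c * q' v = q' v * c by rewrite mulrC.
    rewrite -ler_pdivrMr //; apply: le_INF 0 _ => t.
    rewrite ler_pdivrMr // mulrC.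
    move: (INFle (c *: v) (c * t)).
    by rewrite -scalerA -scalerDr (sublin_hom c (v + t *: e) sq c0) mulrBr mulrA.
  + move=> u v.
    rewrite -lerBlDr; apply: le_INF 0 _ => t1.
    rewrite lerBlDr -lerBlDl; apply: le_INF 0 _ => t2.
    have := INFle (u + v) (t1 + t2).
    have := sq.2 (u + t1 *: e) (v + t2 *: e).
    have -> : u + t1 *: e + (v + t2 *: e) = u + v + (t1 + t2) *: e.
      by rewrite scalerDl; rewrite addrACA.
    move=> h1 h2; lra.
- by move=> v; have := INFle v 0; rewrite scale0r addr0 mul0r subr0.
- apply: transl_eq => v s.
  rewrite -lerBlDr; apply: le_INF 0 _ => t.
  have := INFle (v + s *: e) (t - s).
  rewrite -addrA -scalerDl addrCA subrr addr0 mulrBl => h; lra.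
- move=> e' c' he'; apply: transl_eq => v s.
  rewrite -lerBlDr; apply: le_INF 0 _ => t.
  have := INFle (v + s *: e') t.
  by rewrite addrAC he' => h; lra.
Qed.

Lemma HB_aux {R : realType} {N} (p : 'cV[R]_N -> R) (s : seq 'I_N) :
  sublin p -> exists q (c : 'I_N -> R), [/\ sublin q, (forall v, q v <= p v) &
    forall k, k \in s -> forall v t, q (v + t *: delta_mx k 0) = q v + t * c k].
Proof.
move=> sp; elim: s => [|k0 s [q [c [sq qp hc]]]].
  by exists p, (fun _ => 0); split.
have [sq' q'q tr1 tr2] := ext_step q (delta_mx k0 0) sq.
eexists; exists (fun k => if k == k0 then q (delta_mx k0 0) else c k); split.
- exact: sq'.
- by move=> v; apply: le_trans (q'q v) (qp v).
- move=> k; rewrite inE; case: eqP => [-> _|_ /= ks]; first exact: tr1.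
  exact: tr2 (hc k ks).
Qed.

Lemma HB {R : realType} {N} (p : 'cV[R]_N -> R) :
  sublin p -> exists g : 'cV[R]_N, forall v, vdot g v <= p v.
Proof.
move=> sp; have [q [c [sq qp hc]]] := HB_aux p (enum 'I_N) sp.
exists (\col_k c k) => v.
suff -> : vdot (\col_k c k) v = q v by [].
have hs : forall r : seq 'I_N, q (\sum_(k <- r) v k 0 *: delta_mx k 0) = \sum_(k <- r) v k 0 * c k.
  elim=> [|k r IH]; first by rewrite !big_nil sublin0.
  by rewrite !big_cons addrC hc ?mem_enum // IH addrC.
have hv : v = \sum_(k <- enum 'I_N) v k 0 *: delta_mx k 0.
  rewrite big_enum /= {1}[v]matrix_sum_delta; apply: eq_bigr => i _.
  by rewrite big_ord1.
rewrite {2}hv hs /vdot mxE big_enum /=; apply: eq_bigr => i _.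
by rewrite !mxE mulrC.
Qed.

Lemma vdotDr {R : realType} {k} (u a b : 'cV[R]_k) : vdot u (a + b) = vdot u a + vdot u b.
Proof. by rewrite /vdot mulmxDr mxE. Qed.
Lemma vdotZr {R : realType} {k} (u a : 'cV[R]_k) c : vdot u (c *: a) = c * vdot u a.
Proof. by rewrite /vdot -scalemxAr mxE. Qed.
Lemma vdotNr {R : realType} {k} (u a : 'cV[R]_k) : vdot u (- a) = - vdot u a.
Proof. by rewrite -scaleN1r vdotZr mulN1r. Qed.
Lemma vdotBr {R : realType} {k} (u a b : 'cV[R]_k) : vdot u (a - b) = vdot u a - vdot u b.
Proof. by rewrite vdotDr vdotNr. Qed.
Lemma vdot0r {R : realType} {k} (u : 'cV[R]_k) : vdot u 0 = 0.
Proof. by rewrite /vdot mulmx0 mxE. Qed.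
Lemma vdotC {R : realType} {k} (u v : 'cV[R]_k) : vdot u v = vdot v u.
Proof. by rewrite /vdot !mxE; apply: eq_bigr => i _; rewrite !mxE mulrC. Qed.
Lemma vdotDl {R : realType} {k} (u a b : 'cV[R]_k) : vdot (a + b) u = vdot a u + vdot b u.
Proof. by rewrite vdotC vdotDr !(vdotC u). Qed.
Lemma vdotNl {R : realType} {k} (u a : 'cV[R]_k) : vdot (- a) u = - vdot a u.
Proof. by rewrite vdotC vdotNr vdotC. Qed.
Lemma vdotBl {R : realType} {k} (u a b : 'cV[R]_k) : vdot (a - b) u = vdot a u - vdot b u.
Proof. by rewrite vdotDl vdotNl. Qed.
Lemma vdotZl {R : realType} {k} (u a : 'cV[R]_k) c : vdot (c *: a) u = c * vdot a u.
Proof. by rewrite vdotC vdotZr vdotC. Qed.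
Lemma vdot_ge0 {R : realType} {k} (u : 'cV[R]_k) : 0 <= vdot u u.
Proof. by rewrite /vdot mxE; apply: sumr_ge0 => i _; rewrite mxE -expr2 sqr_ge0. Qed.
Lemma vdotT {R : realType} {k m} (W : 'M[R]_(m, k)) l v : vdot (W^T *m l) v = vdot l (W *m v).
Proof. by rewrite /vdot trmx_mul trmxK mulmxA. Qed.

Lemma lin_alg {R : realType} {N m} (Wb : 'M[R]_(m, N)) (nu : 'cV[R]_N) :
  (forall a, Wb *m a = 0 -> vdot nu a = 0) -> exists lam : 'cV[R]_m, nu = Wb^T *m lam.
Proof.
move=> h.
have : (nu^T <= Wb)%MS.
  rewrite submxE; apply/eqP/matrixP => i j; rewrite ord1 !mxE.
  rewrite -[RHS](h (col j (cokermx Wb))); last by rewrite colE mulmxA mulmx_coker mul0mx.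
  by rewrite /vdot !mxE; apply: eq_bigr => k _; rewrite !mxE.
case/submxP => D hD; exists D^T.
by rewrite -(trmxK nu) hD trmx_mul.
Qed.

Definition convS {R : realType} {N} (A : set 'cV[R]_N) :=
  forall x y t, 0 <= t -> t <= 1 -> A x -> A y -> A (t *: x + (1 - t) *: y).
Definition convF {R : realType} {N} (A : set 'cV[R]_N) (f : 'cV[R]_N -> R) :=
  forall x y t, 0 <= t -> t <= 1 -> A x -> A y ->
    f (t *: x + (1 - t) *: y) <= t * f x + (1 - t) * f y.
Definition setup {R : realType} {N} (U : set 'cV[R]_N) (f : 'cV[R]_N -> R) X :=
  [/\ convS U, convF U f, U X & forall v, exists e, 0 < e /\ U (X + e *: v)].

Definition dq {R : realType} {N} (f : 'cV[R]_N -> R) X v s := (f (X + s *: v) - f X) / s.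
Definition phi {R : realType} {N} (U : set 'cV[R]_N) (f : 'cV[R]_N -> R) X v :=
  INF (fun s : {s : R | 0 < s /\ U (X + s *: v)} => dq f X v (proj1_sig s)).

Lemma comb_id {R : realType} {N} (X v : 'cV[R]_N) t a :
  t *: (X + a *: v) + (1 - t) *: X = X + (t * a) *: v.
Proof.
rewrite scalerDr scalerA scalerBl scale1r.
by rewrite addrAC addrCA subrr addr0 addrC.
Qed.

Lemma dq_mono {R : realType} {N} {U : set 'cV[R]_N} {f X v s s1} :
  setup U f X -> 0 < s -> s <= s1 -> U (X + s1 *: v) ->
  U (X + s *: v) /\ dq f X v s <= dq f X v s1.
Proof.
move=> [cU cf UX _] s0 ss1 U1.
have s10 : 0 < s1 by apply: lt_le_trans ss1.
have t0 : 0 <= s / s1 by rewrite divr_ge0 // ltW.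
have t1 : s / s1 <= 1 by rewrite ler_pdivrMr // mul1r.
have E : X + s *: v = (s / s1) *: (X + s1 *: v) + (1 - s / s1) *: X.
  by rewrite comb_id mulrAC -mulrA divff ?gt_eqF // mulr1.
split; first by rewrite E; apply: cU.
have := cf _ _ _ t0 t1 U1 UX; rewrite -E => h.
rewrite /dq ler_pdivrMr //.
have -> : (f (X + s1 *: v) - f X) / s1 * s = s / s1 * (f (X + s1 *: v) - f X) by ring.
lra.
Qed.

Lemma dq_lb {R : realType} {N} {U : set 'cV[R]_N} {f X v s s'} :
  setup U f X -> 0 < s -> U (X + s *: v) -> 0 < s' -> U (X + s' *: - v) ->
  - dq f X (- v) s' <= dq f X v s.
Proof.
move=> [cU cf UX _] s0 U1 s'0 U2.
set a := s' / (s + s').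
have a0 : 0 <= a by rewrite divr_ge0 // ltW // addr_gt0.
have a1 : a <= 1 by rewrite ler_pdivrMr ?addr_gt0 // mul1r lerDr ltW.
have E : X = a *: (X + s *: v) + (1 - a) *: (X + s' *: - v).
  have c0 : a * s - (1 - a) * s' = 0 by rewrite /a; field; rewrite gt_eqF // addr_gt0.
  apply/matrixP => i j; rewrite !mxE.
  have -> : a * (X i j + s * v i j) + (1 - a) * (X i j + s' * - v i j) = X i j + (a * s - (1 - a) * s') * v i j by ring.
  by rewrite c0 mul0r addr0.
have := cf _ _ _ a0 a1 U1 U2; rewrite -E => h.
rewrite /dq.
have e1 : 1 - a = s / (s + s') by rewrite /a; field; rewrite gt_eqF // addr_gt0.
rewrite e1 /a in h.
set A := f (X + s *: v) in h *; set B := f (X + s' *: - v) in h *.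
have ss : 0 < s + s' by rewrite addr_gt0.
have h' : (s + s') * f X <= s' * A + s * B.
  have -> : s' * A + s * B = (s + s') * (s' / (s + s') * A + s / (s + s') * B) by field; rewrite gt_eqF.
  by rewrite ler_pM2l.
rewrite -mulNr -subr_ge0.
have -> : (A - f X) / s - - (B - f X) / s' = (s' * A + s * B - (s + s') * f X) / (s * s') by field; rewrite ?gt_eqF.
by rewrite divr_ge0 ?subr_ge0 // ltW // mulr_gt0.
Qed.

Lemma phi_le {R : realType} {N} {U : set 'cV[R]_N} {f X v s} :
  setup U f X -> 0 < s -> U (X + s *: v) -> phi U f X v <= dq f X v s.
Proof.
move=> st s0 U1; have [_ _ _ core] := st.
have [e [e0 Ue]] := core (- v).
apply: (INF_le (- dq f X (- v) e) (exist _ s (conj s0 U1))) => [[s' [s'0 U']]] /=.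
exact: (dq_lb st s'0 U' e0 Ue).
Qed.

Lemma le_phi {R : realType} {N} {U : set 'cV[R]_N} {f X v b} :
  setup U f X -> (forall s, 0 < s -> U (X + s *: v) -> b <= dq f X v s) -> b <= phi U f X v.
Proof.
move=> st hb; have [_ _ _ core] := st.
have [e [e0 Ue]] := core v.
apply: (le_INF b (exist _ e (conj e0 Ue))) => [[s' [s'0 U']]] /=.
exact: hb.
Qed.

Lemma phi_sublin {R : realType} {N} (U : set 'cV[R]_N) f X :
  setup U f X -> sublin (phi U f X).
Proof.
move=> st; have [cU cf UX core] := st; split.
- move=> c v c0.
  have -> : c * phi U f X v = phi U f X v * c by rewrite mulrC.
  rewrite -ler_pdivrMr //; apply: le_phi => // s s0 Us.
  rewrite ler_pdivrMr // mulrC.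
  have sc0 : 0 < s / c by rewrite divr_gt0.
  have E : X + (s / c) *: (c *: v) = X + s *: v.
    by rewrite scalerA mulrAC -mulrA divff ?gt_eqF // mulr1.
  have Ucv : U (X + (s / c) *: (c *: v)) by rewrite E.
  have := phi_le st sc0 Ucv.
  suff -> : dq f X (c *: v) (s / c) = c * dq f X v s by [].
  by rewrite /dq E; field; rewrite ?gt_eqF.
- move=> u v.
  rewrite -lerBlDr; apply: le_phi => // s1 s10 U1.
  rewrite lerBlDr -lerBlDl; apply: le_phi => // s2 s20 U2.
  set s := Num.min s1 s2.
  have s0 : 0 < s by rewrite lt_min s10 s20.
  have ss1 : s <= s1 by rewrite /s ge_min lexx.
  have ss2 : s <= s2 by rewrite /s ge_min lexx orbT.
  have [Us1 m1] := dq_mono st s0 ss1 U1.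
  have [Us2 m2] := dq_mono st s0 ss2 U2.
  set r := s / 2.
  have r0 : 0 < r by rewrite divr_gt0.
  have h0 : 0 <= 2^-1 :> R by rewrite invr_ge0.
  have h1 : 2^-1 <= 1 :> R by rewrite invf_le1 // ler1n.
  have E : X + r *: (u + v) = 2^-1 *: (X + s *: u) + (1 - 2^-1) *: (X + s *: v).
    by apply/matrixP => i j; rewrite !mxE /r; field.
  have Ur : U (X + r *: (u + v)) by rewrite E; apply: cU.
  have hf := cf _ _ _ h0 h1 Us1 Us2; rewrite -E in hf.
  have key : dq f X (u + v) r <= dq f X u s + dq f X v s.
    have -> : dq f X u s + dq f X v s = (f (X + s *: u) + f (X + s *: v) - 2 * f X) / s by rewrite /dq; field; rewrite gt_eqF.
    have -> : dq f X (u + v) r = (2 * f (X + r *: (u + v)) - 2 * f X) / s by rewrite /dq /r; field; rewrite gt_eqF.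
    rewrite ler_pM2r ?invr_gt0 //; lra.
  have := phi_le st r0 Ur; lra.
Qed.

Lemma phi_sub1 {R : realType} {N} {U : set 'cV[R]_N} {f X} v :
  setup U f X -> U (X + v) -> phi U f X v <= f (X + v) - f X.
Proof.
move=> st Uv; have := @phi_le _ _ U f X v 1 st ltr01; rewrite scale1r => /(_ Uv).
by rewrite /dq scale1r divr1.
Qed.

Definition cone {R : realType} {N} (A : set 'cV[R]_N) X k :=
  exists t w, [/\ 0 <= t, A w & k = t *: (w - X)].

Lemma cone0 {R : realType} {N} {A : set 'cV[R]_N} {X} : A X -> cone A X 0.
Proof. by move=> AX; exists 0, X; rewrite scale0r. Qed.

Lemma coneZ {R : realType} {N} {A : set 'cV[R]_N} {X k} c : 0 <= c -> cone A X k -> cone A X (c *: k).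
Proof.
move=> c0 [t [w [t0 Aw ->]]]; exists (c * t), w; split => //; first exact: mulr_ge0.
by rewrite scalerA.
Qed.

Lemma coneD {R : realType} {N} {A : set 'cV[R]_N} {X k1 k2} : convS A -> A X ->
  cone A X k1 -> cone A X k2 -> cone A X (k1 + k2).
Proof.
move=> cA AX [t1 [w1 [t10 A1 ->]]] [t2 [w2 [t20 A2 ->]]].
have [T0|Tn0] := eqVneq (t1 + t2) 0.
  have e1 : t1 = 0 by lra.
  have e2 : t2 = 0 by lra.
  by rewrite e1 e2 !scale0r addr0; apply: cone0.
have T0 : 0 < t1 + t2 by rewrite lt_neqAle eq_sym Tn0 addr_ge0.
set a := t1 / (t1 + t2).
have a0 : 0 <= a by rewrite divr_ge0 // ltW.
have a1 : a <= 1 by rewrite ler_pdivrMr // mul1r lerDl.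
exists (t1 + t2), (a *: w1 + (1 - a) *: w2); split => //; first by apply: addr_ge0.
- by apply: cA.
- apply/matrixP => i j; rewrite !mxE /a; field; exact: Tn0.
Qed.

Lemma convS_aff {R : realType} {N m} {A : set 'cV[R]_N} (Wb : 'M[R]_(m, N)) d0 :
  convS A -> convS (fun w => A w /\ Wb *m w = d0).
Proof.
move=> cA x y t t0 t1 [Ax Wx] [Ay Wy]; split; first exact: cA.
rewrite mulmxDr -!scalemxAr Wx Wy -scalerDl.
have -> : t + (1 - t) = 1 by ring.
by rewrite scale1r.
Qed.

Lemma stepA {R : realType} {N} (C U : set 'cV[R]_N) (f : 'cV[R]_N -> R) X :
  convS C -> setup U f X -> C X -> (forall w, C w -> U w) ->
  (forall w, C w -> f X <= f w) ->
  exists g, (forall w, U w -> f X + vdot g (w - X) <= f w) /\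
            (forall k, cone C X k -> 0 <= vdot g k).
Proof.
move=> cC st CX CU opt.
have sphi := phi_sublin U f X st.
have [cU cf UX core] := st.
have phiK k : cone C X k -> 0 <= phi U f X k.
  move=> [t [w [t0 Cw ->]]]; apply: le_phi => // s s0 Us.
  set s2 := Num.min s (t + 1)^-1.
  have t1 : 0 < t + 1 by rewrite ltr_pwDr.
  have s20 : 0 < s2 by rewrite lt_min s0 invr_gt0 t1.
  have ss : s2 <= s by rewrite /s2 ge_min lexx.
  have [_ m] := dq_mono st s20 ss Us.
  apply: le_trans m.
  have st1 : s2 * t <= 1.
    have h : s2 <= (t + 1)^-1 by rewrite /s2 ge_min lexx orbT.
    have h2 : s2 * (t + 1) <= 1 by rewrite -ler_pdivlMr // div1r.
    nra.
  have st0 : 0 <= s2 * t by rewrite mulr_ge0 // ltW.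
  have E : X + s2 *: (t *: (w - X)) = (s2 * t) *: w + (1 - s2 * t) *: X.
    by apply/matrixP => i j; rewrite !mxE; ring.
  have CX' : C (X + s2 *: (t *: (w - X))) by rewrite E; apply: cC.
  by rewrite /dq divr_ge0 ?subr_ge0 ?opt // ltW.
pose p v := INF (fun k : {k | cone C X k} => phi U f X (v + proj1_sig k)).
have k0 : {k | cone C X k} by exists 0; apply: cone0.
have lbp v (k : {k | cone C X k}) : - phi U f X (- v) <= phi U f X (v + proj1_sig k).
  case: k => k Kk /=.
  have h1 := sphi.2 (v + k) (- v); rewrite addrC addKr in h1.
  have := phiK k Kk; lra.
have ple v k (Kk : cone C X k) : p v <= phi U f X (v + k).
  exact: (INF_le _ (exist _ k Kk) (lbp v)).
have sp : sublin p.
  split.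
  - move=> c v c0.
    have -> : c * p v = p v * c by rewrite mulrC.
    rewrite -ler_pdivrMr //; apply: (le_INF _ k0) => [[k Kk]] /=.
    rewrite ler_pdivrMr // mulrC -(sublin_hom _ _ sphi c0) scalerDr.
    by apply: ple; apply: coneZ => //; apply: ltW.
  - move=> u v.
    rewrite -lerBlDr; apply: (le_INF _ k0) => [[k1 K1]] /=.
    rewrite lerBlDr -lerBlDl; apply: (le_INF _ k0) => [[k2 K2]] /=.
    have K12 : cone C X (k1 + k2) by apply: coneD.
    have := ple (u + v) _ K12.
    have := sphi.2 (u + k1) (v + k2).
    rewrite addrACA => h1 h2; lra.
have [g hg] := HB p sp.
exists g; split.
- move=> w Uw.
  have := hg (w - X); have := ple (w - X) 0 (cone0 CX); rewrite addr0.
  have := phi_sub1 (w - X) st; rewrite addrC subrK => /(_ Uw) h1 h2 h3; lra.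
- move=> k Kk.
  have := hg (- k); have := ple (- k) k Kk; rewrite addNr (sublin0 sphi) vdotNr.
  move=> h1 h2; lra.
Qed.

Lemma stepB {R : realType} {N m} (Om : set 'cV[R]_N) (Wb : 'M[R]_(m, N)) d0 X (g : 'cV[R]_N) :
  convS Om -> Om X -> Wb *m X = d0 ->
  (exists w0, Wb *m w0 = d0 /\ forall v, exists e, 0 < e /\ Om (w0 + e *: v)) ->
  (forall k, cone (fun w => Om w /\ Wb *m w = d0) X k -> 0 <= vdot g k) ->
  exists lam, forall w, Om w -> vdot (Wb^T *m lam - g) (w - X) <= 0.
Proof.
move=> cO OX WX [w0 [Ww0 core]] gK.
have KOker k : cone Om X k -> Wb *m k = 0 -> cone (fun w => Om w /\ Wb *m w = d0) X k.
  move=> [t [w [t0 Ow ->]]] Wk.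
  have [->|tn0] := eqVneq t 0; first by rewrite scale0r; apply: cone0.
  exists t, w; split => //; split => //.
  move: Wk; rewrite -scalemxAr mulmxBr WX => /eqP; rewrite scaler_eq0 (negPf tn0) /=.
  by rewrite subr_eq0 => /eqP.
have slater v : exists k, cone Om X k /\ Wb *m (k - v) = 0.
  have [e [e0 Oe]] := core v.
  exists (e^-1 *: (w0 + e *: v - X)); split.
    by exists e^-1, (w0 + e *: v); split => //; rewrite invr_ge0 ltW.
  have -> : e^-1 *: (w0 + e *: v - X) - v = e^-1 *: (w0 - X).
    by apply/matrixP => i j; rewrite !mxE; field; rewrite gt_eqF.
  by rewrite -scalemxAr mulmxBr Ww0 WX subrr scaler0.
pose F v := {k | cone Om X k /\ Wb *m (k - v) = 0}.
have Fin v : F v.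
  by apply: constructive_indefinite_description; apply: slater.
pose p v := INF (fun k : F v => vdot g (proj1_sig k)).
have lbp v (k : F v) : - vdot g (proj1_sig (Fin (- v))) <= vdot g (proj1_sig k).
  case: k => k [Kk Wk] /=; case: (Fin (- v)) => k2 [K2 W2] /=.
  have : cone (fun w => Om w /\ Wb *m w = d0) X (k + k2).
    apply: KOker; first by apply: coneD.
    have -> : k + k2 = (k - v) + (k2 - - v) by rewrite opprK addrACA addNr addr0.
    by rewrite mulmxDr Wk W2 addr0.
  move/gK; rewrite vdotDr; lra.
have ple v k (Kk : cone Om X k) (Wk : Wb *m (k - v) = 0) : p v <= vdot g k.
  exact: (INF_le _ (exist _ k (conj Kk Wk)) (lbp v)).
have sp : sublin p.
  split.
  - move=> c v c0.
    have -> : c * p v = p v * c by rewrite mulrC.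
    rewrite -ler_pdivrMr //; apply: (le_INF _ (Fin v)) => [[k [Kk Wk]]] /=.
    rewrite ler_pdivrMr // mulrC -vdotZr.
    apply: ple; first by apply: coneZ => //; apply: ltW.
    by rewrite -scalerBr -scalemxAr Wk scaler0.
  - move=> u v.
    rewrite -lerBlDr; apply: (le_INF _ (Fin u)) => [[k1 [K1 W1]]] /=.
    rewrite lerBlDr -lerBlDl; apply: (le_INF _ (Fin v)) => [[k2 [K2 W2]]] /=.
    have K12 : cone Om X (k1 + k2) by apply: coneD.
    have W12 : Wb *m (k1 + k2 - (u + v)) = 0.
      by rewrite opprD addrACA mulmxDr W1 W2 addr0.
    have := ple (u + v) _ K12 W12; rewrite vdotDr; lra.
have [nu hnu] := HB p sp.
have [lam hlam] : exists lam, nu = Wb^T *m lam.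
  apply: lin_alg => a Wa.
  have h1 : vdot nu a <= 0.
    apply: le_trans (hnu a) _.
    by have := ple a 0 (cone0 OX); rewrite vdot0r; apply; rewrite sub0r mulmxN Wa oppr0.
  have h2 : vdot nu (- a) <= 0.
    apply: le_trans (hnu (- a)) _.
    by have := ple (- a) 0 (cone0 OX); rewrite vdot0r; apply; rewrite sub0r opprK Wa.
  rewrite vdotNr in h2; lra.
exists lam => w Ow.
have Kw : cone Om X (w - X) by exists 1, w; rewrite scale1r; split => //; apply: ler01.
have := ple (w - X) _ Kw; rewrite subrr mulmx0 => /(_ erefl) h.
have := hnu (w - X); rewrite -hlam vdotBl; lra.
Qed.

Lemma KKT_V {R : realType} {N m} (Om U : set 'cV[R]_N) (f : 'cV[R]_N -> R) (Wb : 'M[R]_(m, N)) d0 X :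
  convS Om -> (forall w, Om w -> U w) -> setup U f X ->
  (exists w0, Wb *m w0 = d0 /\ forall v, exists e, 0 < e /\ Om (w0 + e *: v)) ->
  Om X -> Wb *m X = d0 -> (forall w, Om w -> Wb *m w = d0 -> f X <= f w) ->
  exists g lam, (forall w, U w -> f X + vdot g (w - X) <= f w) /\
     (forall w, Om w -> vdot (Wb^T *m lam - g) (w - X) <= 0).
Proof.
move=> cO OU st sl OX WX opt.
have [g [hg gK]] := stepA _ _ _ _ (convS_aff Wb d0 cO) st (conj OX WX) (fun w Cw => OU w Cw.1)
  (fun w Cw => opt w Cw.1 Cw.2).
have [lam hl] := stepB _ _ _ _ _ cO OX WX sl gK.
by exists g, lam.
Qed.

Lemma lap_entry {R : realType} {n} (a : 'I_n -> 'I_n -> R) i j :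
  laplacian a i j = (if i == j then \sum_k a i k else 0) - a i j.
Proof. by rewrite /laplacian mxE. Qed.

Lemma lap_row {R : realType} {n} (a : 'I_n -> 'I_n -> R) (c : 'I_n -> R) i :
  \sum_j laplacian a i j * c j = (\sum_k a i k) * c i - \sum_j a i j * c j.
Proof.
under eq_bigr do rewrite lap_entry mulrBl.
rewrite sumrB; congr (_ - _).
set x := \sum_k a i k.
rewrite (bigD1 i) //= eqxx.
rewrite [X in _ + X]big1 ?addr0 // => j /negPf; rewrite eq_sym => ->.
by rewrite mul0r.
Qed.

Lemma lap_rowsum {R : realType} {n} (a : 'I_n -> 'I_n -> R) i :
  \sum_j laplacian a i j = 0.
Proof.
have := lap_row a (fun _ => 1) i => /=.
rewrite mulr1 [X in _ = _ - X -> _](eq_bigr (fun j => a i j)) => [|j _]; last by rewrite mulr1.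
rewrite subrr [X in X = _ -> _](eq_bigr (fun j => laplacian a i j)) => [//|j _ //].
by rewrite mulr1.
Qed.

Lemma lap_sym {R : realType} {n} (a : 'I_n -> 'I_n -> R) :
  (forall i j, a i j = a j i) -> (laplacian a)^T = laplacian a.
Proof.
move=> sym; apply/matrixP => i j; rewrite mxE !lap_entry sym eq_sym.
by case: eqP => // ->.
Qed.

Lemma lap_colsum {R : realType} {n} (a : 'I_n -> 'I_n -> R) j :
  (forall i j, a i j = a j i) -> \sum_i laplacian a i j = 0.
Proof.
move=> sym; rewrite -[RHS](lap_rowsum a j); apply: eq_bigr => i _.
by rewrite -{1}(lap_sym a sym) mxE.
Qed.

Lemma lap_ker {R : realType} {n} (a : 'I_n -> 'I_n -> R) (c : 'I_n -> R) :
  (forall i j, a i j = a j i) -> (forall i j, 0 <= a i j) ->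
  (forall i j, connect (fun u v => 0 < a u v) i j) ->
  (forall i, \sum_j laplacian a i j * c j = 0) -> forall i j, c i = c j.
Proof.
move=> sym a0 conn hc.
pose S := \sum_i \sum_j a i j * (c i ^+ 2 - c i * c j).
have S0 : S = 0.
  transitivity (\sum_i c i * \sum_j laplacian a i j * c j); last first.
    by rewrite big1 // => i _; rewrite hc mulr0.
  apply: eq_bigr => i _; rewrite lap_row mulrBr mulr_suml !mulr_sumr -sumrB.
  by apply: eq_bigr => j _; ring.
have S' : S = \sum_i \sum_j a i j * (c j ^+ 2 - c j * c i).
  rewrite /S exchange_big; apply: eq_bigr => i _; apply: eq_bigr => j _.
  by rewrite sym.
have Q0 : \sum_i \sum_j a i j * (c i - c j) ^+ 2 = 0.
  have -> : \sum_i \sum_j a i j * (c i - c j) ^+ 2 = S + S.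
    rewrite {1}S' /S -big_split; apply: eq_bigr => i _; rewrite -big_split.
    by apply: eq_bigr => j _ /=; ring.
  by rewrite S0 addr0.
have pos i j : 0 <= a i j * (c i - c j) ^+ 2 by rewrite mulr_ge0 ?sqr_ge0.
have each i j : a i j * (c i - c j) ^+ 2 = 0.
  move/eqP: Q0; rewrite psumr_eq0 => [/allP /(_ i (mem_index_enum _)) /implyP /(_ isT)|i' _].
    by rewrite psumr_eq0 => [/allP /(_ j (mem_index_enum _)) /implyP /(_ isT) /eqP|]; last by move=> *.
  by apply: sumr_ge0.
have edge i j : 0 < a i j -> c i = c j.
  move=> aij; have := each i j; move/eqP; rewrite mulf_eq0 gt_eqF //= sqrf_eq0 subr_eq0.
  by move/eqP.
move=> i j; have /connectP [p pth ->] := conn i j.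
elim: p i pth => [|y p IH] i //= /andP [eiy py].
by rewrite (edge _ _ eiy) IH.
Qed.

Lemma kronL_cons {R : realType} {n m} (a : 'I_n -> 'I_n -> R) (l : fam R (fun _ : 'I_n => m)) i :
  (forall i j, l i = l j) -> kronL (laplacian a) l i = 0.
Proof.
move=> hl; rewrite /kronL (eq_bigr (fun j => laplacian a i j *: l i)) => [|j _]; last by rewrite (hl j i).
by rewrite -scaler_suml lap_rowsum scale0r.
Qed.

Lemma kronL_sum {R : realType} {n m} (a : 'I_n -> 'I_n -> R) (z : fam R (fun _ : 'I_n => m)) :
  (forall i j, a i j = a j i) -> \sum_i kronL (laplacian a) z i = 0.
Proof.
move=> sym; rewrite /kronL exchange_big big1 // => j _.
by rewrite -scaler_suml lap_colsum // scale0r.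
Qed.

Lemma kronL_ker {R : realType} {n m} (a : 'I_n -> 'I_n -> R) (l : fam R (fun _ : 'I_n => m)) :
  (forall i j, a i j = a j i) -> (forall i j, 0 <= a i j) ->
  (forall i j, connect (fun u v => 0 < a u v) i j) ->
  (forall i, kronL (laplacian a) l i = 0) -> forall i j, l i = l j.
Proof.
move=> sym a0 conn hl i j; apply/matrixP => k k'; rewrite ord1.
apply: (lap_ker a (fun i => l i k 0) sym a0 conn) => r.
transitivity ((kronL (laplacian a) l r) k 0); last by rewrite hl mxE.
rewrite /kronL summxE; apply: eq_bigr => j' _; by rewrite !mxE.
Qed.

Lemma lap_range {R : realType} {n m} (a : 'I_n -> 'I_n -> R) (b : fam R (fun _ : 'I_n => m)) :
  (forall i j, a i j = a j i) -> (forall i j, 0 <= a i j) ->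
  (forall i j, connect (fun u v => 0 < a u v) i j) ->
  \sum_i b i = 0 -> exists z, forall i, kronL (laplacian a) z i = b i.
Proof.
move=> sym a0 conn hb.
pose B := \matrix_(i < n, k < m) b i k 0.
have : (B^T <= laplacian a)%MS.
  rewrite submxE; apply/eqP/matrixP => k j; rewrite [LHS]mxE [RHS]mxE.
  have hc : forall i i', cokermx (laplacian a) i j = cokermx (laplacian a) i' j.
    apply: (lap_ker a (fun i => cokermx (laplacian a) i j) sym a0 conn) => r.
    transitivity ((laplacian a *m cokermx (laplacian a)) r j); first by rewrite mxE.
    by rewrite mulmx_coker mxE.
  have [i0 _|n0] := pickP (@predT 'I_n).
    rewrite (eq_bigr (fun i => b i k 0 * cokermx (laplacian a) i0 j)) => [|i _]; last by rewrite (hc i i0) !mxE.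
    by rewrite -mulr_suml -summxE hb mxE mul0r.
  by rewrite big1 // => i _; have := n0 i.
case/submxP => D hD.
exists (fun j => \col_k (D^T j k)) => i; apply/matrixP => k k'; rewrite ord1.
have : B i k = (laplacian a *m D^T) i k.
  by rewrite -(lap_sym a sym) -trmx_mul -hD !mxE.
rewrite !mxE /kronL summxE => ->; apply: eq_bigr => j _.
by rewrite !mxE.
Qed.

Lemma nbhs_core {R : realType} {k} (A : set 'cV[R]_k) (x : 'cV[R]_k) :
  nbhs x A -> forall v, exists e, 0 < e /\ forall t, 0 < t -> t <= e -> A (x + t *: v).
Proof.
move=> /nbhs_ballP [r r0 hr] v.
have n0 : 0 < `|v| + 1 by rewrite ltr_pwDr.
exists (r / (`|v| + 1)); split; first by rewrite divr_gt0.
move=> t t0 te; apply: hr; rewrite -ball_normE /= opprD addrA subrr sub0r normrN normrZ.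
rewrite gtr0_norm //.
have h1 : t * `|v| <= r / (`|v| + 1) * `|v| by apply: ler_wpM2r.
have h2 : r / (`|v| + 1) * `|v| < r.
  by rewrite mulrAC ltr_pdivrMr // ltr_pM2l // ltrDl ltr01.
lra.
Qed.

Definition flat {R : realType} {n} {q : 'I_n -> nat} (x : fam R q) : 'cV[R]_(\sum_i q i) := \mxcol_i x i.
Definition unflat {R : realType} {n} {q : 'I_n -> nat} (v : 'cV[R]_(\sum_i q i)) : fam R q :=
  fun i => submxcol v i.

Lemma unflatK {R : realType} {n} {q : 'I_n -> nat} (x : fam R q) : unflat (flat x) = x.
Proof. by apply: functional_extensionality_dep => i; rewrite /unflat /flat mxcolK. Qed.
Lemma flatK {R : realType} {n} {q : 'I_n -> nat} (v : 'cV[R]_(\sum_i q i)) : flat (unflat v) = v.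
Proof. by rewrite /unflat /flat submxcolK. Qed.

Lemma fdot_flat {R : realType} {n} {q : 'I_n -> nat} (u v : fam R q) :
  fdot u v = vdot (flat u) (flat v).
Proof.
rewrite /vdot /flat tr_mxcol mul_mxrow_mxcol summxE /fdot.
by apply: eq_bigr.
Qed.

Lemma flatB {R : realType} {n} {q : 'I_n -> nat} (u v : fam R q) :
  flat (fsub u v) = flat u - flat v.
Proof. by rewrite /flat /fsub mxcolB. Qed.

Lemma unflatD {R : realType} {n} {q : 'I_n -> nat} (u v : 'cV[R]_(\sum_i q i)) i :
  unflat (u + v) i = unflat u i + unflat v i.
Proof. by rewrite /unflat submxcolD. Qed.

Lemma unflatZ {R : realType} {n} {q : 'I_n -> nat} (u : 'cV[R]_(\sum_i q i)) c i :
  unflat (c *: u) i = c *: unflat u i.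
Proof. by apply/matrixP => j k; rewrite /unflat !mxE. Qed.

Lemma Wmul_flat {R : realType} {n m} {q : 'I_n -> nat} (W : forall i, 'M[R]_(m, q i)) (x : fam R q) :
  Wmul W x = \mxrow_i W i *m flat x.
Proof. by rewrite /Wmul /flat mul_mxrow_mxcol. Qed.

Lemma WbarT_flat {R : realType} {n m} {q : 'I_n -> nat} (W : forall i, 'M[R]_(m, q i)) (lam : 'cV[R]_m) :
  flat (WbarT W (fun _ => lam)) = (\mxrow_i W i)^T *m lam.
Proof. by rewrite /flat /WbarT tr_mxrow mxcol_mul. Qed.

Definition projV {R : realType} {N} (Om : set 'cV[R]_N) Y X :=
  Om X /\ forall Z, Om Z -> vdot (Y - X) (Y - X) <= vdot (Y - Z) (Y - Z).

Lemma vdot_sq {R : realType} {N} (r e : 'cV[R]_N) t :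
  vdot (r - t *: e) (r - t *: e) = vdot r r - 2 * t * vdot r e + t ^+ 2 * vdot e e.
Proof.
rewrite !vdotBl !vdotBr !vdotZl !vdotZr (vdotC e r); ring.
Qed.

Lemma proj_VI {R : realType} {N} (Om : set 'cV[R]_N) Y X :
  convS Om -> projV Om Y X -> forall W, Om W -> vdot (Y - X) (W - X) <= 0.
Proof.
move=> cO [OX hX] W OW; rewrite leNgt; apply/negP => pos.
set r := Y - X in pos *; set e := W - X in pos *.
have ee := vdot_ge0 e.
set t := vdot r e / (vdot r e + vdot e e).
have den : 0 < vdot r e + vdot e e by apply: ltr_pwDl.
have t0 : 0 < t by rewrite divr_gt0.
have t1 : t <= 1 by rewrite ler_pdivrMr // mul1r lerDl.
have OZ : Om (t *: W + (1 - t) *: X) by apply: cO => //; apply: ltW.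
have := hX _ OZ.
have -> : Y - (t *: W + (1 - t) *: X) = r - t *: e.
  by apply/matrixP => i j; rewrite !mxE; ring.
rewrite vdot_sq => h.
have h2 : t * vdot e e < vdot r e.
  by rewrite /t mulrAC ltr_pdivrMr // ltr_pM2l // ltrDr.
have h3 : 2 * t * vdot r e <= t ^+ 2 * vdot e e by lra.
have h4 : 0 < t * (vdot r e - t * vdot e e) by rewrite mulr_gt0 // subr_gt0.
rewrite expr2 in h3; nra.
Qed.

Lemma vdot_eq0 {R : realType} {N} (u : 'cV[R]_N) : vdot u u = 0 -> u = 0.
Proof.
rewrite /vdot mxE => /eqP; rewrite psumr_eq0 => [/allP h|i _]; last by rewrite mxE -expr2 sqr_ge0.
apply/matrixP => i j; rewrite ord1 mxE.
by have /implyP /(_ isT) := h i (mem_index_enum _); rewrite mxE -expr2 sqrf_eq0 => /eqP.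
Qed.

Lemma proj_uniq {R : realType} {N} (Om : set 'cV[R]_N) Y X1 X2 :
  convS Om -> projV Om Y X1 -> projV Om Y X2 -> X1 = X2.
Proof.
move=> cO p1 p2.
have h1 := proj_VI _ _ _ cO p1 _ p2.1.
have h2 := proj_VI _ _ _ cO p2 _ p1.1.
have : vdot (X2 - X1) (X2 - X1) <= 0.
  have -> : vdot (X2 - X1) (X2 - X1) = vdot (Y - X1) (X2 - X1) + vdot (Y - X2) (X1 - X2).
    rewrite !vdotBl !vdotBr; rewrite !(vdotC Y) !(vdotC X1 X2) ; ring.
  lra.
move=> h; have : vdot (X2 - X1) (X2 - X1) = 0 by apply/eqP; rewrite eq_le h vdot_ge0.
by move/vdot_eq0/eqP; rewrite subr_eq0 => /eqP.
Qed.

Lemma convP {R : realType} {k} (A : set 'cV[R]_k) : convex_set A ->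
  forall x y (t : R), 0 <= t -> t <= 1 -> A x -> A y -> A (t *: x + (1 - t) *: y).
Proof.
move=> cA x y t t0 t1 Ax Ay.
have := cA x y (Itv01 t0 t1); rewrite !inE => /(_ Ax Ay).
by [].
Qed.

Lemma sc_conv {R : realType} {k} (A : set 'cV[R]_k) F : strictly_convex_on A F ->
  forall x y (t : R), 0 <= t -> t <= 1 -> A x -> A y ->
  F (t *: x + (1 - t) *: y) <= t * F x + (1 - t) * F y.
Proof.
move=> sc x y t t0 t1 Ax Ay.
have [->|tn0] := eqVneq t 0; first by rewrite scale0r add0r subr0 scale1r mul0r add0r mul1r.
have [->|tn1] := eqVneq t 1; first by rewrite scale1r subrr scale0r addr0 mul1r mul0r addr0.
have [->|xy] := eqVneq x y.
  by rewrite -scalerDl -mulrDl addrC subrK scale1r mul1r.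
apply: ltW; apply: sc => //.
by rewrite lt_neqAle eq_sym tn0 t0 /= lt_neqAle tn1 t1.
Qed.

Lemma prod_convS {R : realType} {n} {q : 'I_n -> nat} (A : forall i, set 'cV[R]_(q i)) :
  (forall i, convex_set (A i)) -> convS (fun v => prod_set A (unflat v)).
Proof.
move=> cA x y t t0 t1 Ax Ay i.
by rewrite unflatD !unflatZ; apply: convP.
Qed.

Lemma sum_convF {R : realType} {n} {q : 'I_n -> nat} (A : forall i, set 'cV[R]_(q i)) F :
  (forall i, strictly_convex_on (A i) (F i)) ->
  convF (fun v => prod_set A (unflat v)) (fun v => sum_fun F (unflat v)).
Proof.
move=> sc x y t t0 t1 Ax Ay.
rewrite /sum_fun !mulr_sumr -big_split /=; apply: ler_sum => i _.
by rewrite unflatD !unflatZ; apply: sc_conv.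
Qed.

Lemma prod_core {R : realType} {n} {q : 'I_n -> nat} (A : forall i, set 'cV[R]_(q i)) (x : fam R q) :
  (forall i, nbhs (x i) (A i)) ->
  forall v, exists e, 0 < e /\ prod_set A (unflat (flat x + e *: v)).
Proof.
move=> nb v.
have /fin_all_exists [e he] : forall i, exists e, 0 < e /\ forall t, 0 < t -> t <= e -> A i (x i + t *: unflat v i).
  by move=> i; apply: nbhs_core.
set S := \sum_i (e i)^-1.
have S0 : 0 <= S by apply: sumr_ge0 => i _; rewrite invr_ge0 ltW // (he i).1.
have E0 : 0 < (1 + S)^-1 by rewrite invr_gt0 ltr_pwDl.
exists (1 + S)^-1; split => // i.
rewrite unflatD unflatZ /unflat /flat mxcolK.
apply: (he i).2 => //.
have ei := (he i).1.
have : (e i)^-1 <= S.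
  rewrite /S (bigD1 i) //= lerDl; apply: sumr_ge0 => j _.
  by have := (he j).1; rewrite invr_ge0 => /ltW.
move=> h; rewrite -(invrK (e i)) lef_pV2 ?posrE ?invr_gt0 ?ltr_pwDl //.
by apply: le_trans h _; rewrite lerDr.
Qed.

Lemma proj_to_V {R : realType} {n} {q : 'I_n -> nat} {S : forall i, set 'cV[R]_(q i)} {y x : fam R q} :
  is_proj (prod_set S) y x -> projV (fun v => prod_set S (unflat v)) (flat y) (flat x).
Proof.
move=> [Sx h]; split; first by rewrite unflatK.
move=> Z SZ; have := h _ SZ; by rewrite !fdot_flat !flatB flatK.
Qed.

Lemma proj_of_V {R : realType} {n} {q : 'I_n -> nat} {S : forall i, set 'cV[R]_(q i)} {y x : fam R q} :
  projV (fun v => prod_set S (unflat v)) (flat y) (flat x) -> is_proj (prod_set S) y x.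
Proof.
move=> [Sx h]; split; first by move: Sx; rewrite unflatK.
move=> z Sz; rewrite !fdot_flat !flatB; apply: h; by rewrite unflatK.
Qed.

Lemma WbarT_zero {R : realType} {n m} {q : 'I_n -> nat} (W : forall i, 'M[R]_(m, q i))
  (l : fam R (fun _ : 'I_n => m)) (w x : fam R q) :
  (forall i j, l i = l j) -> Wmul W w = Wmul W x -> fdot (WbarT W l) (fsub w x) = 0.
Proof.
move=> hl hw; have [i0 _|n0] := pickP (@predT 'I_n).
  have -> : l = fun _ => l i0 by apply: functional_extensionality_dep => i; apply: hl.
  by rewrite fdot_flat WbarT_flat vdotT flatB mulmxBr -!Wmul_flat hw subrr vdot0r.
by rewrite /fdot big1 // => i _; have := n0 i.
Qed.

Theorem theorem1 (R : realType) (n m : nat) (q : 'I_n -> nat)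
  (a : 'I_n -> 'I_n -> R)
  (Om U : forall i : 'I_n, set 'cV[R]_(q i))
  (F : forall i : 'I_n, 'cV[R]_(q i) -> R)
  (W : forall i : 'I_n, 'M[R]_(m, q i))
  (d : fam R (fun _ : 'I_n => m)) (d0 : 'cV[R]_m) :
  (forall i j, a i j = a j i) ->
  (forall i j, 0 <= a i j) ->
  (forall i j, connect (fun u v => 0 < a u v) i j) ->
  (forall i, closed (Om i)) -> (forall i, convex_set (Om i)) ->
  (forall i, open (U i)) -> (forall i, convex_set (U i)) ->
  (forall i, Om i `<=` U i) ->
  (forall i, strictly_convex_on (U i) (F i)) ->
  \sum_i d i = d0 ->
  (exists x : fam R q, (forall i, (Om i)° (x i)) /\ Wmul W x = d0) ->
  let Omega := prod_set Om in
  let Udom := prod_set U in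
  let f := sum_fun F in
  let L := laplacian a in
  (forall (y : fam R q) (l z : fam R (fun _ : 'I_n => m)),
     dpofa_equilibrium Omega Udom f W L d y l z ->
     forall x, is_proj Omega y x -> is_solution Omega f W d0 x) /\
  (forall x : fam R q, is_solution Omega f W d0 x ->
     exists (y : fam R q) (l z : fam R (fun _ : 'I_n => m)),
       dpofa_equilibrium Omega Udom f W L d y l z /\ is_proj Omega y x).
Proof.
move=> sym a0 conn clO cvO opU cvU OU scF hd [x0 [intx0 Wx0]].
cbv zeta.
have cO := prod_convS Om cvO.
have OUp : forall w : fam R q, prod_set Om w -> prod_set U w by move=> w Ow i; apply: OU.
split.
- move=> y l z [x1 [g [pr1 [sg [e1 [e2 e3]]]]]] x pr.
  have lc := kronL_ker a l sym a0 conn e3.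
  have ex : x = x1.
    have := proj_uniq _ _ _ _ cO (proj_to_V pr) (proj_to_V pr1).
    by move/(congr1 unflat); rewrite !unflatK.
  subst x.
  have Wx1 : Wmul W x1 = d0.
    have hs : \sum_i (d i - Wbar W x1 i - kronL (laplacian a) l i - kronL (laplacian a) z i) = 0.
      by rewrite big1.
    have kl : \sum_i kronL (laplacian a) l i = 0 by rewrite big1 // => i _; apply: kronL_cons.
    rewrite !sumrB hd kl kronL_sum // !subr0 in hs.
    by apply/eqP; rewrite eq_sym -subr_eq0; apply/eqP.
  split; first exact: pr1.1.
  split; first exact: Wx1.
  move=> w Ow Ww.
  have := sg w (OUp w Ow).
  have hg : forall i, g i = - y i + x1 i + WbarT W l i.
    move=> i; apply/matrixP => a' b'.
    have := congr1 (fun M : 'cV[R]_(q i) => M a' b') (e1 i); rewrite /= !mxE => h; lra.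
  have dotg : fdot g (fsub w x1) = fdot (WbarT W l) (fsub w x1) - fdot (fsub y x1) (fsub w x1).
    rewrite /fdot -sumrB; apply: eq_bigr => i _.
    by rewrite hg /fsub !vdotDl !vdotNl; ring.
  have Owf : prod_set Om (unflat (flat w)) by rewrite unflatK.
  have vi := proj_VI _ _ _ cO (proj_to_V pr1) (flat w) Owf.
  rewrite -!flatB -fdot_flat in vi.
  rewrite dotg WbarT_zero // ?Wx1 // => h; lra.
- move=> x [Ox [Wx opt]].
  pose OmV := fun v => prod_set Om (unflat v).
  pose UV := fun v => prod_set U (unflat v).
  pose fV := fun v => sum_fun F (unflat v).
  pose Wb := \mxrow_i W i.
  have st : setup UV fV (flat x).
    split.
    + exact: prod_convS U cvU.
    + exact: sum_convF U F scF.
    + by rewrite /UV unflatK; apply: OUp.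
    + move=> v; apply: prod_core => i.
      by apply: open_nbhs_nbhs; split; [apply: opU | apply: OU; apply: Ox].
  have sl : exists w0, Wb *m w0 = d0 /\ forall v, exists e, 0 < e /\ OmV (w0 + e *: v).
    exists (flat x0); split; first by rewrite -Wmul_flat.
    by apply: prod_core.
  have OX : OmV (flat x) by rewrite /OmV unflatK.
  have WX : Wb *m flat x = d0 by rewrite -Wmul_flat.
  have opt' : forall w, OmV w -> Wb *m w = d0 -> fV (flat x) <= fV w.
    move=> w Ow Ww; rewrite /fV unflatK; apply: opt => //.
    by rewrite Wmul_flat flatK.
  have [g [lam [hsub hvi]]] := KKT_V OmV UV fV Wb d0 (flat x) cO (fun w Ow i => OU i _ (Ow i)) st sl OX WX opt'.
  pose gF := unflat g : fam R q.
  pose lF := (fun _ => lam) : fam R (fun _ : 'I_n => m).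
  pose y := (fun i => x i - gF i + WbarT W lF i) : fam R q.
  have [z hz] : exists z, forall i, kronL (laplacian a) z i = d i - Wbar W x i.
    apply: lap_range => //.
    rewrite sumrB hd.
    have -> : \sum_i Wbar W x i = Wmul W x by [].
    by rewrite Wx subrr.
  have fy : flat y = flat x - g + Wb^T *m lam.
    by rewrite /y /flat mxcolD mxcolB -/(flat x) -/(flat gF) -/(flat (WbarT W lF)) flatK WbarT_flat.
  have prj : is_proj (prod_set Om) y x.
    apply: proj_of_V; split => // Z OZ.
    rewrite fy.
    have -> : flat x - g + Wb^T *m lam - flat x = Wb^T *m lam - g.
      by apply/matrixP => a' b'; rewrite !mxE; ring.
    have -> : flat x - g + Wb^T *m lam - Z = (Wb^T *m lam - g) - 1 *: (Z - flat x).
      by apply/matrixP => a' b'; rewrite !mxE; ring.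
    rewrite vdot_sq; have := hvi Z OZ; have := vdot_ge0 (Z - flat x); lra.
  exists y, lF, z; split => //.
  exists x, gF; split => //; split.
    move=> x' Ux'; rewrite fdot_flat flatB flatK.
    have := hsub (flat x'); rewrite /UV /fV !unflatK => /(_ Ux').
    by [].
  split.
    by move=> i; apply/matrixP => a' b'; rewrite /y !mxE; ring.
  split.
    by move=> i; rewrite (kronL_cons a lF i (fun _ _ => erefl)) hz subr0 subrr.
  by move=> i; apply: kronL_cons.
Qed.
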